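(* Let $J^\star$ be the optimal cost function of the belief MDP with true parameter $\bm{\theta}$, $\overline{J}^\star$ that of the belief MDP with conjectured parameter $\overline{\bm{\theta}}$, and $\tilde J(\mathbf{b})=V^\star(\Phi(\mathbf{b}))$ the quantized approximation built from the conjectured model (see context). Suppose $\alpha\in[0,2]$ satisfies $\sum_{\mathbf{b}'\in\mathcal{B}}|p_{\bm{\theta}}(\mathbf{b}'\mid\mathbf{b},a)-p_{\overline{\bm{\theta}}}(\mathbf{b}'\mid\mathbf{b},a)|\le\alpha$ for all $\mathbf{b}\in\mathcal{B},a\in\mathcal{A}$. Let $c_{\max}=\max_{\mathbf{b}\in\mathcal{B},a\in\mathcal{A}}\hat c(\mathbf{b},a)$ and $\epsilon=\max_{\tilde{\mathbf{b}}\in\tilde{\mathcal{B}}}\sup_{\mathbf{b},\mathbf{b}'\in S_{\tilde{\mathbf{b}}}}|\overline{J}^\star(\mathbf{b})-\overline{J}^\star(\mathbf{b}')|$, where $S_{\tilde{\mathbf{b}}}=\{\mathbf{b}\in\mathcal{B}:\Phi(\mathbf{b})=\tilde{\mathbf{b}}\}$. Then $$\|\tilde J-J^\star\|_\infty\le\frac{\epsilon}{1-\gamma}+\frac{\gamma\alpha c_{\max}}{(1-\gamma)^2}.$$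
   Context: A POMDP has finite state space $\mathcal{S}=\{1,\dots,n\}$, finite action and observation spaces, costs $c(s,a)$ and discount factor $\gamma\in(0,1)$. Its belief MDP has state space $\mathcal{B}$ (the probability simplex over $\mathcal{S}$), cost $\hat c(\mathbf{b},a)=\sum_s\mathbf{b}(s)c(s,a)$, and belief transition probabilities $p_{\bm{\theta}'}(\mathbf{b}'\mid\mathbf{b},a)$ depending on a parameter vector $\bm{\theta}'$ (nonzero for finitely many $\mathbf{b}'$ given $\mathbf{b},a$). For $\bm{\theta}'\in\{\bm{\theta},\overline{\bm{\theta}}\}$ the optimal discounted cost function satisfies the Bellman equation $J(\mathbf{b})=\min_a[\hat c(\mathbf{b},a)+\gamma\sum_{\mathbf{b}'}p_{\bm{\theta}'}(\mathbf{b}'\mid\mathbf{b},a)J(\mathbf{b}')]$; these are $J^\star$ (for $\bm{\theta}$) and $\overline{J}^\star$ (for $\overline{\bm{\theta}}$). For a resolution $r\in\{1,2,\dots\}$, $\tilde{\mathcal{B}}=\{\tilde{\mathbf{b}}\in\mathcal{B}:\tilde{\mathbf{b}}(s)=\beta_s/r,\ \beta_s\in\{0,\dots,r\},\ \sum_s\beta_s=r\}$ and $\Phi(\mathbf{b})=\arg\min_{\tilde{\mathbf{b}}\in\tilde{\mathcal{B}}}\|\mathbf{b}-\tilde{\mathbf{b}}\|_\infty$ (ties broken consistently). The quantized MDP has state space $\tilde{\mathcal{B}}$, cost $\hat c$, transitions $\hat p_{\overline{\bm{\theta}}}(\tilde{\mathbf{b}}'\mid\tilde{\mathbf{b}},a)=\sum_{\mathbf{b}'}p_{\overline{\bm{\theta}}}(\mathbf{b}'\mid\tilde{\mathbf{b}},a)\delta_{\tilde{\mathbf{b}}'\Phi(\mathbf{b}')}$,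 discount $\gamma$, and optimal cost function $V^\star$. *)

(* Defs.v *)
From mathcomp Require Import all_boot all_order all_algebra.
From mathcomp Require Import all_classical all_reals.
Set Implicit Arguments. Unset Strict Implicit. Unset Printing Implicit Defensive.
Import Order.TTheory GRing.Theory Num.Theory.
Local Open Scope classical_set_scope.
Local Open Scope ring_scope.

Section Defs.
Variables (R : realType) (n : nat) (A : finType).

Definition belief := {ffun 'I_n -> R}.

Definition simplex : set belief :=
  [set b | (forall s, 0 <= b s) /\ \sum_(s < n) b s = 1].

Definition grid (r : nat) : set belief :=
  [set bt | exists beta : 'I_n -> nat,
      (forall s, (beta s <= r)%N) /\ (\sum_(s < n) beta s)%N = r /\
      forall s, bt s = (beta s)%:R / r%:R].

Definition dist_inf (b b' : belief) : R := \big[Num.max/0]_(s < n) `|b s - b' s|.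

Definition is_quantizer (r : nat) (Phi : belief -> belief) : Prop :=
  forall b, simplex b -> grid r (Phi b) /\
    forall bt, grid r bt -> dist_inf b (Phi b) <= dist_inf b bt.

Definition chat (c : 'I_n -> A -> R) (b : belief) (a : A) : R :=
  \sum_(s < n) b s * c s a.

Definition belief_kernel (p : belief -> A -> belief -> R) : Prop :=
  forall b a, simplex b ->
    finite_set [set b' | p b a b' != 0] /\
    (forall b', p b a b' != 0 -> simplex b') /\
    (forall b', 0 <= p b a b') /\
    \sum_(b' \in [set: belief]) p b a b' = 1.

Definition is_min_over_actions (x : R) (Q : A -> R) : Prop :=
  (exists a, x = Q a) /\ (forall a, x <= Q a).

(* J is the optimal discounted cost function of the belief MDP with kernel p:
   the bounded solution on B of the Bellman equation. *)
Definition optimal_cost (c : 'I_n -> A -> R) (gamma : R)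
    (p : belief -> A -> belief -> R) (J : belief -> R) : Prop :=
  (exists M, forall b, simplex b -> `|J b| <= M) /\
  forall b, simplex b ->
    is_min_over_actions (J b)
      (fun a => chat c b a + gamma * \sum_(b' \in [set: belief]) p b a b' * J b').

Definition quantized_kernel (Phi : belief -> belief)
    (p : belief -> A -> belief -> R) (bt : belief) (a : A) (bt' : belief) : R :=
  \sum_(b' \in [set: belief]) p bt a b' * (if bt' == Phi b' then 1 else 0).

Definition optimal_cost_quantized (r : nat) (c : 'I_n -> A -> R) (gamma : R)
    (Phi : belief -> belief) (p : belief -> A -> belief -> R) (V : belief -> R)
    : Prop :=
  forall bt, grid r bt ->
    is_min_over_actions (V bt)
      (fun a => chat c bt a + gamma *
         \sum_(bt' \in grid r) quantized_kernel Phi p bt a bt' * V bt').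

Definition cmax (c : 'I_n -> A -> R) : R :=
  sup [set chat c b a | b in simplex & a in [set: A]].

Definition cell (Phi : belief -> belief) (bt : belief) : set belief :=
  [set b | simplex b /\ Phi b = bt].

Definition quant_eps (r : nat) (Phi : belief -> belief) (J : belief -> R) : R :=
  sup [set sup [set `|J b - J b'| | b in cell Phi bt & b' in cell Phi bt]
      | bt in grid r].

End Defs.

(* Main.v *)
Require Import Defs.
From mathcomp Require Import all_boot all_order all_algebra.
From mathcomp Require Import all_classical all_reals.
From mathcomp Require Import finmap ring lra.
Import Order.TTheory GRing.Theory Num.Theory.
Local Open Scope classical_set_scope.
Local Open Scope ring_scope.

Lemma kTs {R : realType} {n : nat} {A : finType} (q : belief R n -> A -> belief R n -> R)
  b a (f : belief R n -> R) (s : {fset belief R n}) :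
  (forall x, q b a x != 0 -> x \in s) ->
  \sum_(x \in [set: belief R n]) q b a x * f x = \sum_(x <- s) q b a x * f x.
Proof.
move=> hs; apply: fsbigTE => x xs.
case: (eqVneq (q b a x) 0) => [->|/hs]; first by rewrite mul0r.
by rewrite (negbTE xs).
Qed.

Definition supp {R : realType} {n : nat} {A : finType} (q : belief R n -> A -> belief R n -> R)
  b a : {fset belief R n} := fset_set [set x | q b a x != 0].

Lemma supp_in {R : realType} {n : nat} {A : finType} (q : belief R n -> A -> belief R n -> R) b a :
  belief_kernel q -> simplex b -> forall x, q b a x != 0 -> x \in supp q b a.
Proof.
move=> hq hb x hx; have [fin _] := hq b a hb.
by rewrite /supp in_fset_set //; apply: mem_set.
Qed.

Lemma supp_simplex {R : realType} {n : nat} {A : finType} (q : belief R n -> A -> belief R n -> R) b a :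
  belief_kernel q -> simplex b -> forall x, x \in supp q b a -> simplex x /\ q b a x != 0.
Proof.
move=> hq hb x; have [fin [hs _]] := hq b a hb.
rewrite /supp in_fset_set // => /set_mem /= hx; split => //; exact: hs.
Qed.

Lemma ksum1 {R : realType} {n : nat} {A : finType} (q : belief R n -> A -> belief R n -> R) b a :
  belief_kernel q -> simplex b -> \sum_(x <- supp q b a) q b a x = 1.
Proof.
move=> hq hb; have [_ [_ [_ h1]]] := hq b a hb.
rewrite -h1 (fsbigTE (supp q b a)) // => x xs.
apply/eqP; apply: contraNT xs; exact: supp_in.
Qed.

Lemma mean_le {R : realType} {n : nat} {A : finType} (q : belief R n -> A -> belief R n -> R) b a
  (f : belief R n -> R) K :
  belief_kernel q -> simplex b -> (forall x, simplex x -> f x <= K) ->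
  \sum_(x \in [set: belief R n]) q b a x * f x <= K.
Proof.
move=> hq hb hf; rewrite (kTs _ _ _ _ _ (supp_in q b a hq hb)).
have [_ [_ [hpos _]]] := hq b a hb.
apply: (@le_trans _ _ (\sum_(x <- supp q b a) q b a x * K)).
  rewrite big_seq_cond [X in _ <= X]big_seq_cond; apply: ler_sum => x /andP[xs _].
  apply: ler_wpM2l => //; apply: hf; exact: (supp_simplex q b a hq hb x xs).1.
by rewrite -mulr_suml ksum1 // mul1r.
Qed.

Lemma mean_lin {R : realType} {n : nat} {A : finType} (q : belief R n -> A -> belief R n -> R) b a
  (f g : belief R n -> R) :
  belief_kernel q -> simplex b ->
  \sum_(x \in [set: belief R n]) q b a x * f x - \sum_(x \in [set: belief R n]) q b a x * g x
  = \sum_(x \in [set: belief R n]) q b a x * (f x - g x).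
Proof.
move=> hq hb; rewrite !(kTs _ _ _ _ _ (supp_in q b a hq hb)) -sumrB.
by apply: eq_bigr => x _; rewrite mulrBr.
Qed.

Lemma mean_diff {R : realType} {n : nat} {A : finType} (p q : belief R n -> A -> belief R n -> R) b a
  (f : belief R n -> R) K alpha :
  belief_kernel p -> belief_kernel q -> simplex b -> 0 <= K ->
  (forall x, simplex x -> `|f x| <= K) ->
  \sum_(x \in [set: belief R n]) `|p b a x - q b a x| <= alpha ->
  `|\sum_(x \in [set: belief R n]) p b a x * f x - \sum_(x \in [set: belief R n]) q b a x * f x|
   <= K * alpha.
Proof.
move=> hp hq hb hK hf hal.
pose s := (supp p b a `|` supp q b a)%fset.
have hsp : forall x, p b a x != 0 -> x \in s.
  by move=> x /(supp_in p b a hp hb) h; rewrite inE h.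
have hsq : forall x, q b a x != 0 -> x \in s.
  by move=> x /(supp_in q b a hq hb) h; rewrite inE h orbT.
rewrite (kTs _ _ _ _ _ hsp) (kTs _ _ _ _ _ hsq).
move: hal; rewrite (fsbigTE s); last first.
  move=> x xs; apply/eqP; rewrite normr_eq0; apply: contraNT xs => h.
  case: (eqVneq (p b a x) 0) => [e|/hsp //]; apply: hsq; move: h; by rewrite e sub0r oppr_eq0.
move=> hal; rewrite -sumrB.
apply: (le_trans (ler_norm_sum _ _ _)).
apply: (@le_trans _ _ (\sum_(x <- s) `|p b a x - q b a x| * K)).
  rewrite big_seq_cond [X in _ <= X]big_seq_cond; apply: ler_sum => x /andP[xs _].
  rewrite -mulrBl normrM; apply: ler_wpM2l => //; apply: hf.
  move: xs; rewrite inE => /orP[] xs.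
    exact: (supp_simplex p b a hp hb x xs).1.
  exact: (supp_simplex q b a hq hb x xs).1.
rewrite -mulr_suml mulrC; exact: ler_wpM2l.
Qed.

Lemma sup_contract {R : realType} {T : Type} (S : set T) (f : T -> R) g e :
  0 <= g < 1 -> (exists M, forall b, S b -> f b <= M) ->
  (forall K, (forall b, S b -> f b <= K) -> forall b, S b -> f b <= g * K + e) ->
  forall b, S b -> f b <= e / (1 - g).
Proof.
move=> /andP[g0 g1] [M hM] H b Sb.
have hub : has_ubound (f @` S) by exists M => _ [x Sx <-]; exact: hM.
set D := sup (f @` S).
have ub : forall x, S x -> f x <= D by move=> x Sx; apply: ub_le_sup => //; exists x.
have hD : D <= g * D + e.
  apply: ge_sup; first by exists (f b), b.
  by move=> _ [x Sx <-]; exact: H.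
apply: (le_trans (ub b Sb)).
rewrite ler_pdivlMr ?subr_gt0 //; nra.
Qed.

Lemma grid_simplex {R : realType} {n : nat} (r : nat) (bt : belief R n) :
  (0 < r)%N -> grid r bt -> simplex bt.
Proof.
move=> r0 [beta [_ [hs hb]]]; split.
  by move=> s; rewrite hb divr_ge0.
under eq_bigr do rewrite hb.
by rewrite -mulr_suml -natr_sum hs divff // pnatr_eq0 -lt0n.
Qed.

Lemma grid_finite {R : realType} {n : nat} (r : nat) : finite_set (@grid R n r).
Proof.
pose h := fun beta : {ffun 'I_n -> 'I_r.+1} =>
  [ffun s => ((beta s : nat)%:R / r%:R : R)] : belief R n.
apply: (sub_finite_set (B := h @` setT)); last exact: finite_image.
move=> bt [beta [hle [_ hb]]]; exists [ffun s => inord (beta s)] => //.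
apply/ffunP => s; rewrite !ffunE inordK ?ltnS // hb.
Qed.

Lemma quant_fix {R : realType} {n : nat} (r : nat) (Phi : belief R n -> belief R n) bt :
  (0 < r)%N -> is_quantizer r Phi -> grid r bt -> Phi bt = bt.
Proof.
move=> r0 hQ gb; have [_ hmin] := hQ bt (grid_simplex _ _ r0 gb).
have := hmin bt gb.
have -> : dist_inf bt bt = 0.
  rewrite /dist_inf; elim/big_rec: _ => // i x _ ->; by rewrite subrr normr0 maxxx.
move=> h; apply/ffunP => s; apply/eqP; rewrite eq_sym -subr_eq0 -normr_eq0.
rewrite eq_le normr_ge0 andbT; apply: le_trans h.
by rewrite /dist_inf (bigD1 s) //= le_max lexx.
Qed.

Lemma grid_bound {R : realType} {n : nat} (r : nat) (V : belief R n -> R) :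
  exists M, forall bt, grid r bt -> `|V bt| <= M.
Proof.
exists (\sum_(x <- fset_set (@grid R n r)) `|V x|) => bt gb.
have ib : bt \in fset_set (grid r) by rewrite in_fset_set; [apply: mem_set | exact: grid_finite].
rewrite (bigD1_seq bt) //= ?fset_uniq //; rewrite lerDl sumr_ge0 //.
Qed.

Lemma qsum {R : realType} {n : nat} {A : finType} (r : nat) (Phi : belief R n -> belief R n)
  (q : belief R n -> A -> belief R n -> R) (V : belief R n -> R) bt a :
  is_quantizer r Phi -> belief_kernel q -> simplex bt ->
  \sum_(bt' \in grid r) quantized_kernel Phi q bt a bt' * V bt' =
  \sum_(x \in [set: belief R n]) q bt a x * V (Phi x).
Proof.
move=> hQ hq hb.
have fin := @grid_finite R n r.
rewrite (fsbig_fwiden (fset_set (grid r))) //; first last.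
- by move=> x [/= xi ng]; exfalso; apply: ng; move: xi; rewrite in_fset_set // => /set_mem.
- by move=> x gx /=; rewrite in_fset_set //; apply: mem_set.
rewrite (kTs _ _ _ _ _ (supp_in q bt a hq hb)).
rewrite /quantized_kernel.
under eq_bigr do rewrite (kTs _ _ _ _ _ (supp_in q bt a hq hb)) mulr_suml.
rewrite exchange_big /=.
rewrite big_seq_cond [X in _ = X]big_seq_cond; apply: eq_bigr => x /andP[xs _].
have [sx _] := supp_simplex q bt a hq hb x xs.
have iP : Phi x \in fset_set (grid r).
  by rewrite in_fset_set //; apply: mem_set; exact: (hQ x sx).1.
rewrite (bigD1_seq (Phi x)) //= ?fset_uniq // eqxx mulr1 big1 ?addr0 // => y /negbTE ->.
by rewrite mulr0 mul0r.
Qed.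

Lemma cost_bounds {R : realType} {n : nat} {A : finType} (c : 'I_n -> A -> R) gamma
  (q : belief R n -> A -> belief R n -> R) (J : belief R n -> R) :
  (forall s a, 0 <= c s a) -> 0 < gamma < 1 -> belief_kernel q -> optimal_cost c gamma q J ->
  forall b, simplex b -> 0 <= J b <= cmax c / (1 - gamma).
Proof.
move=> c0 /andP[g0 g1] hq [[M hM] hJ].
have hch : forall b a, simplex b -> 0 <= chat c b a <= cmax c.
  move=> b a [bpos bsum]; apply/andP; split.
    by apply: sumr_ge0 => s _; rewrite mulr_ge0.
  apply: sup_upper_bound; last by exists b => //; exists a.
  split; first by exists (chat c b a), b => //; exists a.
  exists (\sum_(s < n) \sum_(a' : A) c s a') => _ [x [xpos xsum]] [a' _ <-].
  apply: (@le_trans _ _ (\sum_(s < n) x s * \sum_(a'' : A) c s a'')).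
    apply: ler_sum => s _; apply: ler_wpM2l => //.
    by rewrite (bigD1 a') //= lerDl sumr_ge0.
  apply: (@le_trans _ _ (\sum_(s < n) x s * \sum_(s' < n) \sum_(a'' : A) c s' a'')).
    apply: ler_sum => s _; apply: ler_wpM2l => //.
    by rewrite (bigD1 s) //= lerDl sumr_ge0 // => i _; rewrite sumr_ge0.
  by rewrite -mulr_suml xsum mul1r.
move=> b hb; apply/andP; split.
  suff: - J b <= 0 / (1 - gamma) by rewrite mul0r oppr_le0.
  apply: (@sup_contract R _ (@simplex R n) (fun x => - J x) gamma 0) => //; first by rewrite g1 ltW.
    by exists M => x hx; apply: le_trans (hM x hx); rewrite -normrN ler_norm.
  move=> K hK x hx; have [[a ->] _] := hJ x hx.
  have := mean_le q x a (fun y => - J y) K hq hx hK.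
  have -> : \sum_(y \in [set: belief R n]) q x a y * - J y =
     - \sum_(y \in [set: belief R n]) q x a y * J y.
    rewrite !(kTs _ _ _ _ _ (supp_in q x a hq hx)) -sumrN.
    by apply: eq_bigr => y _; rewrite mulrN.
  move=> hh.
  have := (hch x a hx); move=> /andP[h1 _]. nra.
apply: (@sup_contract R _ (@simplex R n) J gamma (cmax c)) => //; first by rewrite g1 ltW.
  by exists M => x hx; apply: le_trans (hM x hx); rewrite ler_norm.
move=> K hK x hx; have [[a ->] _] := hJ x hx.
have := mean_le q x a J K hq hx hK.
have := (hch x a hx); move=> /andP[_ h1] h2. nra.
Qed.

Theorem theorem4p5 (R : realType) (n : nat) (A : finType) (r : nat)
    (c : 'I_n -> A -> R) (gamma alpha : R)
    (p pbar : belief R n -> A -> belief R n -> R)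
    (Phi : belief R n -> belief R n)
    (Jstar Jbarstar V : belief R n -> R) :
  (0 < n)%N -> (0 < #|A|)%N -> (0 < r)%N ->
  (forall s a, 0 <= c s a) ->
  0 < gamma < 1 ->
  belief_kernel p -> belief_kernel pbar ->
  is_quantizer r Phi ->
  optimal_cost c gamma p Jstar ->
  optimal_cost c gamma pbar Jbarstar ->
  optimal_cost_quantized r c gamma Phi pbar V ->
  0 <= alpha <= 2 ->
  (forall b a, simplex b ->
     \sum_(b' \in [set: belief R n]) `|p b a b' - pbar b a b'| <= alpha) ->
  forall b, simplex b ->
    `|V (Phi b) - Jstar b| <=
      quant_eps r Phi Jbarstar / (1 - gamma)
      + gamma * alpha * cmax c / (1 - gamma) ^+ 2.
Proof.
move=> n0 A0 r0 c0 hg hp hpb hQ hJ hJb hV /andP[al0 _] hdiff b hb.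
have /andP[g0 g1] := hg.
have g01 : 0 <= gamma < 1 by rewrite g1 ltW.
set C := cmax c / (1 - gamma).
have JB := cost_bounds c gamma p Jstar c0 hg hp hJ.
have C0 : 0 <= C by have /andP[h1 h2] := JB b hb; exact: le_trans h2.
have hJabs : forall x, simplex x -> `|Jstar x| <= C.
  by move=> x hx; have /andP[h1 h2] := JB x hx; rewrite ger0_norm.
have [[M1 hM1] hJ2] := hJ.
have [[M2 hM2] hJb2] := hJb.
have M20 : 0 <= M2 by apply: le_trans (hM2 b hb).
have hE : forall x, simplex x -> `|Jstar x - Jbarstar x| <= (gamma * (C * alpha)) / (1 - gamma).
  apply: (@sup_contract R _ (@simplex R n) (fun x => `|Jstar x - Jbarstar x|)) => //.
    exists (M1 + M2) => x hx; apply: le_trans (ler_normB _ _) _.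
    by apply: lerD; [exact: hM1 | exact: hM2].
  move=> K hK x hx.
  have hK' : forall y, simplex y -> `|Jbarstar y - Jstar y| <= K.
    by move=> y hy; rewrite distrC; exact: hK.
  have [[a1 e1] m1] := hJb2 x hx.
  have [[a2 e2] m2] := hJ2 x hx.
  have d1 := mean_diff p pbar x a1 Jstar C alpha hp hpb hx C0 hJabs (hdiff x a1 hx).
  have d2 := mean_diff p pbar x a2 Jstar C alpha hp hpb hx C0 hJabs (hdiff x a2 hx).
  have l1 := mean_lin pbar x a1 Jstar Jbarstar hpb hx.
  have l2 := mean_lin pbar x a2 Jbarstar Jstar hpb hx.
  have k1 := mean_le pbar x a1 (fun y => Jstar y - Jbarstar y) K hpb hx
    (fun y hy => le_trans (ler_norm _) (hK y hy)).
  have k2 := mean_le pbar x a2 (fun y => Jbarstar y - Jstar y) K hpb hx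
    (fun y hy => le_trans (ler_norm _) (hK' y hy)).
  have m1' := m2 a1. have m2' := m1 a2.
  move: d1 d2; rewrite !ler_norml => /andP[d1 d1'] /andP[d2 d2'].
  apply/andP; split; nra.
pose I bt := [set `|Jbarstar b1 - Jbarstar b2| | b1 in cell Phi bt & b2 in cell Phi bt].
have inner_ub : forall bt, has_ubound (I bt).
  move=> bt; exists (M2 + M2) => _ [b1 [sb1 _] [b2 [sb2 _] <-]].
  apply: le_trans (ler_normB _ _) _.
  by apply: lerD; [exact: hM2 | exact: hM2].
have inner_le : forall bt, sup (I bt) <= M2 + M2.
  move=> bt; case: (pselect (I bt !=set0)) => ne.
    apply: ge_sup => // _ [b1 [sb1 _] [b2 [sb2 _] <-]].
    apply: le_trans (ler_normB _ _) _.
    by apply: lerD; [exact: hM2 | exact: hM2].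
  by rewrite sup_out ?addr_ge0 // => -[].
have heps : forall x, simplex x -> `|Jbarstar (Phi x) - Jbarstar x| <= quant_eps r Phi Jbarstar.
  move=> x hx; have gx := (hQ x hx).1.
  apply: (@le_trans _ _ (sup (I (Phi x)))).
    apply: ub_le_sup; first exact: inner_ub.
    exists (Phi x); first by split; [exact: (grid_simplex _ _ r0 gx) | exact: (quant_fix _ _ _ r0 hQ gx)].
    by exists x.
  apply: ub_le_sup; last by exists (Phi x).
  by exists (M2 + M2) => _ [bt _ <-]; exact: inner_le.
have [MV hMV] := grid_bound r V.
have hD : forall x, simplex x -> `|V (Phi x) - Jbarstar x| <= quant_eps r Phi Jbarstar / (1 - gamma).
  apply: (@sup_contract R _ (@simplex R n) (fun x => `|V (Phi x) - Jbarstar x|)) => //.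
    exists (MV + M2) => x hx; apply: le_trans (ler_normB _ _) _.
    by apply: lerD; [exact: hMV (hQ x hx).1 | exact: hM2].
  move=> K hK x hx.
  have hK' : forall y, simplex y -> `|Jbarstar y - V (Phi y)| <= K.
    by move=> y hy; rewrite distrC; exact: hK.
  have gb := (hQ x hx).1; have sbt := grid_simplex _ _ r0 gb.
  have [[a1 e1] m1] := hV _ gb.
  have [[a2 e2] m2] := hJb2 _ sbt.
  have m1' := m1 a2; have m2' := m2 a1.
  rewrite qsum // in e1; rewrite qsum // in m1'.
  have l1 := mean_lin pbar (Phi x) a1 Jbarstar (fun y => V (Phi y)) hpb sbt.
  have l2 := mean_lin pbar (Phi x) a2 (fun y => V (Phi y)) Jbarstar hpb sbt.
  have k1 := mean_le pbar (Phi x) a1 (fun y => Jbarstar y - V (Phi y)) K hpb sbt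
    (fun y hy => le_trans (ler_norm _) (hK' y hy)).
  have k2 := mean_le pbar (Phi x) a2 (fun y => V (Phi y) - Jbarstar y) K hpb sbt
    (fun y hy => le_trans (ler_norm _) (hK y hy)).
  have hq : `|V (Phi x) - Jbarstar (Phi x)| <= gamma * K.
    rewrite ler_norml; apply/andP; split; nra.
  apply: le_trans (ler_distD (Jbarstar (Phi x)) _ _) _.
  apply: lerD => //; exact: heps.
apply: le_trans (ler_distD (Jbarstar b) _ _) _.
apply: lerD; first exact: hD.
rewrite distrC; apply: le_trans (hE b hb) _.
have hne : 1 - gamma != 0 by rewrite subr_eq0 eq_sym lt_eqF.
rewrite le_eqVlt; apply/orP; left; apply/eqP; rewrite /C; field.
by [].
Qed.
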